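(* Let $(P,\mathit{dist})$ be a finite metric space of doubling dimension $d$, let $S\subseteq P$ be non-empty with $n=|S|$, let $t\ge 1$ be an integer (possibly depending on $n$), and let $c=2(4e)^d$. Assume $n\ge c+1$. Then Algorithm $\mathrm{SparseSepAnn}(S,n,d,t)$ has expected running time $O(cn)$, and it returns a point $p\in S$ and a real number $R>0$ such that (1) $|\mathit{ball}_S(p,R)|\ge n/c$, (2) $|\mathit{annulus}_S(p,R,(1+1/t)R)|\le n/t$, and (3) $|S\setminus \mathit{ball}_S(p,(1+1/t)R)|\ge n/2$.
   Context: For $X\subseteq P$, $p\in P$ and reals $R'\ge R\ge 0$: $\mathit{ball}_X(p,R)=\{x\in X:\mathit{dist}(p,x)\le R\}$ and $\mathit{annulus}_X(p,R,R')=\{x\in X: R<\mathit{dist}(p,x)\le R'\}$. The doubling dimension of $(P,\mathit{dist})$ is $\log_2\lambda$, where $\lambda$ is the smallest integer such that for every $p\in P$ and real $R>0$, $\mathit{ball}_P(p,R)$ is covered by at most $\lambda$ balls $\mathit{ball}_P(q,R/2)$ with $q\in P$. Distances are obtained from an oracle in $O(1)$ time. Algorithm $\mathrm{SepAnn}(S,n,d,\mu,c)$ (for reals $\mu\ge1$, $c>1$): repeat: choose $p$ uniformly at random from $S$; compute $R_p=\min\{r>0:|\mathit{ball}_S(p,r)|\ge n/c\}$ (by expected-linear-time selection of the $\lceil n/c\rceil$-th smallest distance from $p$ to the points of $S$, including $p$); until $|\mathit{ball}_S(p,\mu R_p)|\le n/2$ (checked by scanning the distances); return $p$ and $R'=R_p$.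 Algorithm $\mathrm{SparseSepAnn}(S,n,d,t)$: set $c=2(4e)^d$; let $p\in S$ and $R'>0$ be the output of $\mathrm{SepAnn}(S,n,d,e,c)$; for $i=0,\dots,t$ let $R_i=(1+1/t)^iR'$ and for $i=1,\dots,t$ let $A_i=\mathit{annulus}_S(p,R_{i-1},R_i)$; repeat: choose $i$ uniformly at random from $\{1,\dots,t\}$ and compute $s=|A_i|$ by scanning the distances from $p$; until $s\le n/t$; return $p$ and $R=R_{i-1}$. *)

(* Defs.v *)
From HB Require Import structures.
From mathcomp Require Import all_boot all_order all_algebra.
From mathcomp Require Import reals sequences exp.
Set Implicit Arguments. Unset Strict Implicit. Unset Printing Implicit Defensive.
Import Order.TTheory GRing.Theory Num.Theory.
Local Open Scope ring_scope.

Section Metric.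
Variables (R : realType) (P : finType) (dist : P -> P -> R).

Definition is_metric : Prop :=
  [/\ forall x y, 0 <= dist x y,
      forall x y, dist x y = 0 <-> x = y,
      forall x y, dist x y = dist y x &
      forall x y z, dist x z <= dist x y + dist y z].

Definition ball (X : {set P}) (p : P) (r : R) : {set P} :=
  [set x in X | dist p x <= r].

Definition annulus (X : {set P}) (p : P) (r r' : R) : {set P} :=
  [set x in X | (r < dist p x) && (dist p x <= r')].

Definition doubling_ok (lam : nat) : Prop :=
  forall (p : P) (r : R), 0 < r ->
    exists Q : {set P}, (#|Q| <= lam)%N /\
      ball [set: P] p r \subset \bigcup_(q in Q) ball [set: P] q (r / 2).

Definition doubling_constant (lam : nat) : Prop :=
  doubling_ok lam /\ forall l, doubling_ok l -> (lam <= l)%N.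

Definition doubling_dim (lam : nat) : R := ln (lam%:R) / ln 2.

End Metric.

(* A tiny language of randomized programs with a cost counter.        *)
(*   Tick k m    : spend k elementary steps, then run m               *)
(*   Unif m f    : draw i uniformly from 'I_m.+1, then run f i        *)
(*   Fail        : the fuel used to unfold loops ran out              *)
(* Loops "repeat ... until" are unfolded with a fuel k; the semantics  *)
(* of the real (unbounded) algorithm is the limit k -> +oo, which is   *)
(* monotone.  Expected cost of the unbounded run = sup_k of the        *)
(* expected cost of the k-truncated run.                              *)
Inductive prog (A : Type) : Type :=
| Ret of A
| Tick of nat & prog A
| Unif (m : nat) of ('I_m.+1 -> prog A)
| Fail.
Arguments Ret {A}. Arguments Tick {A}. Arguments Unif {A}. Arguments Fail {A}.

Fixpoint bind (A B : Type) (m : prog A) (f : A -> prog B) : prog B :=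
  match m with
  | Ret a => f a
  | Tick k m' => Tick k (bind m' f)
  | Unif n g => Unif n (fun i => bind (g i) f)
  | Fail => Fail
  end.

(* uniform choice from a (duplicate-free) nonempty sequence *)
Definition unif_seq (X A : Type) (s : seq X) (f : X -> prog A) : prog A :=
  match s with
  | [::] => Fail
  | x0 :: _ => Unif (size s).-1 (fun i => f (nth x0 s i))
  end.

Fixpoint loop (A : Type) (fuel : nat) (body : prog (option A)) : prog A :=
  match fuel with
  | 0 => Fail
  | k.+1 => bind body (fun o => if o is Some a then Ret a else loop k body)
  end.

Section Semantics.
Variable R : realType.

(* probability that the program terminates (within fuel) with an output in E *)
Fixpoint pr (A : Type) (m : prog A) (E : A -> bool) : R :=
  match m with
  | Ret a => (E a)%:R
  | Tick _ m' => pr m' E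
  | Unif n g => (n.+1)%:R^-1 * \sum_(i < n.+1) pr (g i) E
  | Fail => 0
  end.

Fixpoint ecost (A : Type) (m : prog A) : R :=
  match m with
  | Ret _ => 0
  | Tick k m' => k%:R + ecost m'
  | Unif n g => (n.+1)%:R^-1 * \sum_(i < n.+1) ecost (g i)
  | Fail => 0
  end.
End Semantics.
Arguments pr {R A}.
Arguments ecost {R A}.

(* The algorithms.  Cost model (real RAM, distance oracle O(1)):      *)
(*  - SepAnn iteration: sample p (1), compute the n distances from p  *)
(*    (n), selection of the ceil(n/c)-th smallest distance (charged   *)
(*    its expected linear cost n), scan for |ball(p, mu R_p)| (n).    *)
(*  - SparseSepAnn iteration: sample i (1), scan distances from p (n).*)
(*  - one initial step for computing c.                               *)
Section Algorithms.
Variables (R : realType) (P : finType) (dist : P -> P -> R).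

(* R_p = min { r > 0 : |ball_S(p,r)| >= n/c } (attained at a distance) *)
Definition sep_radius (S : {set P}) (n : nat) (c : R) (p : P) : R :=
  head 0 [seq r <- sort <=%R [seq dist p x | x <- enum S]
         | (0 < r) && (n%:R / c <= #|ball dist S p r|%:R)].

Definition SepAnn_body (S : {set P}) (n : nat) (mu c : R)
  : prog (option (P * R)) :=
  unif_seq (enum S) (fun p =>
    let Rp := sep_radius S n c p in
    Tick (3 * n).+1
      (Ret (if #|ball dist S p (mu * Rp)|%:R <= n%:R / 2 :> R
            then Some (p, Rp) else None))).

Definition SepAnn (fuel : nat) (S : {set P}) (n : nat) (mu c : R)
  : prog (P * R) := loop fuel (SepAnn_body S n mu c).

(* R_i = (1 + 1/t)^i R' ; A_i = annulus_S(p, R_{i-1}, R_i), i in 1..t *)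
Definition Rseq (t : nat) (R' : R) (i : nat) : R := (1 + t%:R^-1) ^+ i * R'.

Definition SparseSepAnn_body (S : {set P}) (n t : nat) (p : P) (R' : R)
  : prog (option (P * R)) :=
  (* choose j uniformly in 'I_t, i.e. i = j+1 uniformly in {1,..,t} *)
  Unif t.-1 (fun j : 'I_t.-1.+1 =>
    let i := (val j).+1 in
    Tick n.+1
      (Ret (if #|annulus dist S p (Rseq t R' i.-1) (Rseq t R' i)|%:R
               <= n%:R / t%:R :> R
            then Some (p, Rseq t R' i.-1) else None))).

Definition SparseSepAnn (fuel : nat) (S : {set P}) (n : nat) (d : R) (t : nat)
  : prog (P * R) :=
  let c := 2 * (4 * expR 1) `^ d in
  Tick 1 (bind (SepAnn fuel S n (expR 1) c) (fun pR' =>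
    loop fuel (SparseSepAnn_body S n t pR'.1 pR'.2))).

End Algorithms.

(* Main.v *)
Require Import Defs.
From HB Require Import structures.
From mathcomp Require Import all_boot all_order all_algebra.
From mathcomp Require Import reals sequences exp.
From mathcomp Require Import ring lra zify.
Import Order.TTheory GRing.Theory Num.Theory.
Set Implicit Arguments. Unset Strict Implicit.
Local Open Scope ring_scope.


Section Progs.
Variable R : realType.

Fixpoint allret {A : Type} (Q : A -> Prop) (m : prog A) : Prop :=
  match m with
  | Ret a => Q a
  | Tick _ m' => allret Q m'
  | Unif n g => forall i, allret Q (g i)
  | Fail => True
  end.

Lemma allret_pr0 (A : Type) (Q : A -> Prop) (E : A -> bool) (m : prog A) :
  allret Q m -> (forall a, Q a -> E a = false) -> pr m E = 0 :> R.
Proof.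
elim: m => [a|k m IH|n g IH|] /= H HE.
- by rewrite HE.
- exact: IH.
- by rewrite big1 ?mulr0 // => i _; apply: IH.
- by [].
Qed.

Lemma allret_bind (A B : Type) (Q : A -> Prop) (Q' : B -> Prop) m (f : A -> prog B) :
  allret Q m -> (forall a, Q a -> allret Q' (f a)) -> allret Q' (bind m f).
Proof.
elim: m => [a|k m IH|n g IH|] /= H Hf //; first exact: Hf.
- exact: IH.
- by move=> i; apply: IH.
Qed.

Lemma allret_loop (A : Type) (Q : A -> Prop) fuel (body : prog (option A)) :
  allret (fun o => if o is Some a then Q a else True) body -> allret Q (loop fuel body).
Proof.
elim: fuel => [|k IH] //= H; have IH' := IH H; apply: allret_bind H _ => -[a|] //=.
Qed.

Lemma allret_unif_seq (X A : Type) (Q : A -> Prop) (s : seq X) (f : X -> prog A) (P : X -> Prop):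
  (forall x, P x -> allret Q (f x)) -> (forall i x0, (i < size s)%N -> P (nth x0 s i)) ->
  allret Q (unif_seq s f).
Proof.
case: s => [|x0 s] //= Hf Hs i; apply: Hf; apply: Hs; exact: ltn_ord.
Qed.

Lemma pr_ge0 (A : Type) (m : prog A) E : 0 <= pr m E :> R.
Proof.
elim: m => [a|k m IH|n g IH|] //=.
by rewrite mulr_ge0 // ?invr_ge0 ?ler0n // sumr_ge0.
Qed.

Lemma pr_le1 (A : Type) (m : prog A) E : pr m E <= 1 :> R.
Proof.
elim: m => [a|k m IH|n g IH|] //=; first by case: (E a).
rewrite ler_pdivrMl ?ltr0n // mulr1.
apply: le_trans (ler_sum _ (fun i _ => IH i)) _.
by rewrite sumr_const card_ord.
Qed.

Lemma ecost_ge0 (A : Type) (m : prog A) : 0 <= ecost m :> R.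
Proof.
elim: m => [a|k m IH|n g IH|] //=; first by rewrite addr_ge0.
by rewrite mulr_ge0 // ?invr_ge0 ?ler0n // sumr_ge0.
Qed.

Lemma ecost_bind (A B : Type) (Q : A -> Prop) m (f : A -> prog B) (E : A -> bool) (b : R) :
  0 <= b -> allret Q m -> (forall a, Q a -> ecost (f a) <= b * (E a)%:R) ->
  ecost (bind m f) <= ecost m + b * pr m E.
Proof.
move=> b0; elim: m => [a|k m IH|n g IH|] /= H Hf.
- by rewrite add0r; apply: Hf.
- by rewrite -addrA lerD2l; apply: IH.
- rewrite mulrA [b * _]mulrC -mulrA -mulrDr ler_pM2l ?invr_gt0 ?ltr0n //.
  rewrite mulr_sumr -big_split /=; apply: ler_sum => i _; exact: IH.
- by rewrite mulr0 addr0.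
Qed.

Lemma ecost_loop (A : Type) (body : prog (option A)) (Q : option A -> Prop) (K q : R) :
  0 < q -> allret Q body -> ecost body <= K ->
  pr body (fun o => if o is None then true else false) <= 1 - q ->
  forall fuel, ecost (loop fuel body) <= K / q.
Proof.
move=> q0 HQ HK Hp; elim => [|k IH] /=.
  by rewrite divr_ge0 // ?(ltW q0) // (le_trans (ecost_ge0 body)).
have K0 : 0 <= K by apply: le_trans (ecost_ge0 body) HK.
have Kq0 : 0 <= K / q by rewrite divr_ge0 // ltW.
apply: le_trans (@ecost_bind _ _ Q body _ (fun o => if o is None then true else false) _ Kq0 HQ _) _.
  by move=> [a|] _ /=; rewrite ?mulr0 ?mulr1.
apply: le_trans (lerD HK (ler_wpM2l Kq0 Hp)) _.
rewrite mulrBr mulr1 divfK ?gt_eqF //; lra.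
Qed.

End Progs.


Section Reals.
Variable R : realType.

Lemma e_bounds : 9/4 <= expR 1 :> R /\ expR 1 < 4 :> R.
Proof.
have h : expR 1 = expR (2^-1) ^+ 2 :> R.
  by rewrite -expRM_natl; congr expR; field.
have l1 : 1 + 2^-1 <= expR (2^-1) :> R by apply: expR_ge1Dx.
have l2 : 1 + (- 2^-1) < expR (- 2^-1) :> R.
  apply: expR_gt1Dx; rewrite oppr_eq0 invr_eq0; apply/eqP; lra.
have l3 : expR (2^-1) * expR (- 2^-1) = 1 :> R by rewrite -expRD subrr expR0.
have p0 : 0 < expR (2^-1) :> R := expR_gt0 _.
rewrite h; split; nra.
Qed.

Lemma c_bound (lam : nat) : (2 <= lam)%N ->
  (lam ^ 3)%:R * 9 / 8 <= (4 * expR 1) `^ (ln lam%:R / ln 2) :> R.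
Proof.
move=> l2.
have [e1 e2] := e_bounds.
have ln20 : 0 < ln (2:R) by apply: ln_gt0; lra.
have lam0 : 0 < lam%:R :> R by rewrite ltr0n; case: lam l2.
have lnl : ln (2:R) <= ln lam%:R.
  by rewrite ler_ln ?posrE // ?ler_nat //; lra.
set d := ln lam%:R / ln 2.
have d1 : 1 <= d by rewrite /d ler_pdivlMr // mul1r.
have -> : 4 * expR 1 = 8 * (expR 1 / 2) :> R by field.
rewrite powRM; [|lra|lra].
have h8 : (8:R) `^ d = (lam ^ 3)%:R.
  rewrite /powR ifF; last by apply/negbTE; lra.
  have -> : (8:R) = 2 ^+ 3 by rewrite !exprS expr0; lra.
  rewrite lnXn; last lra.
  have -> : d * (ln 2 *+ 3) = 3%:R * ln lam%:R.
    by rewrite /d -mulr_natr; field; lra.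
  by rewrite expRM_natl lnK ?posrE // natrX.
have hd : expR 1 / 2 <= (expR 1 / 2) `^ d.
  by rewrite -[X in X <= _]powRr1 ?ler_powR //; lra.
rewrite h8.
have : 0 <= (lam ^ 3)%:R :> R by [].
nra.
Qed.
End Reals.


Lemma card_bigcup_le (T I : finType) (P : pred I) (F : I -> {set T}) :
  (#|\bigcup_(i | P i) F i| <= \sum_(i | P i) #|F i|)%N.
Proof.
apply: (big_ind2 (fun (X : {set T}) (s : nat) => #|X| <= s)%N) => //.
- by rewrite cards0.
- move=> X1 s1 X2 s2 H1 H2; apply: leq_trans (leq_card_setU X1 X2) _.
  exact: leq_add.
Qed.

Section Geo.
Variables (R : realType) (P : finType) (dist : P -> P -> R).
Hypothesis Hm : is_metric dist.

Lemma dist_ge0 x y : 0 <= dist x y. Proof. by case: Hm. Qed.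
Lemma dist_xx x : dist x x = 0. Proof. by case: Hm => _ H _ _; apply/H. Qed.
Lemma dist_sym x y : dist x y = dist y x. Proof. by case: Hm. Qed.
Lemma dist_tri x y z : dist x z <= dist x y + dist y z. Proof. by case: Hm. Qed.
Lemma dist_gt0 x y : x != y -> 0 < dist x y.
Proof.
move=> xy; rewrite lt_neqAle dist_ge0 andbT; apply/eqP => H.
by case: Hm => _ H2 _ _; move/eqP: xy; apply; apply/H2.
Qed.

Variables (S : {set P}) (c : R).
Hypothesis Hnc : 1 < #|S|%:R / c.

Let sr := sep_radius dist S #|S| c.

Lemma sr_spec x (r0 : R) : x \in S -> 0 <= r0 -> #|S|%:R / c <= #|ball dist S x r0|%:R ->
  [/\ 0 < sr x, #|S|%:R / c <= #|ball dist S x (sr x)|%:R & sr x <= r0].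
Proof.
move=> xS r00 Hb.
set B := ball dist S x r0.
have xB : x \in B.
 by rewrite /B /ball in_set xS dist_xx.
case: (arg_maxP (dist x) xB) => y yB0 ymax0.
have yB : y \in B by exact: yB0.
have ymax : forall j, j \in B -> dist x j <= dist x y by move=> j jB; exact: ymax0 j jB.
have yS : y \in S by move: yB; rewrite /B /ball in_set => /andP[].
have yr0 : dist x y <= r0 by move: yB; rewrite /B /ball in_set => /andP[].
have eqB : ball dist S x (dist x y) = B.
  apply/setP => z; rewrite /B /ball !in_set; apply/idP/idP => /andP[zS hz].
    by rewrite zS (le_trans hz yr0).
  by rewrite zS ymax // /B /ball in_set zS.
have B1 : (1 < #|B|)%N by rewrite -(ltr_nat R); apply: lt_le_trans Hb.
case/card_gt1P: B1 => z1 [z2 [z1B z2B z12]].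
have [z [zB zx]] : exists z, z \in B /\ z != x.
  case: (eqVneq z1 x) => [e1|]; last by exists z1.
  by exists z2; split => //; rewrite -e1 eq_sym.
have dy0 : 0 < dist x y by apply: lt_le_trans (@dist_gt0 x z _) (ymax _ zB); rewrite eq_sym.
set pred0 := fun r => (0 < r) && (#|S|%:R / c <= #|ball dist S x r|%:R).
set L := [seq r <- sort <=%R [seq dist x w | w <- enum S] | pred0 r].
have inL : dist x y \in L.
  by rewrite mem_filter /pred0 dy0 eqB Hb mem_sort map_f // mem_enum.
have srt : sorted <=%R L.
  by apply: sorted_filter; [exact: le_trans | apply: sort_sorted; exact: le_total].
have -> : sr x = head 0 L by [].
have hL : head 0 L \in L by move: inL; case: (L) => //= h t _; rewrite mem_head.
have hmin : head 0 L <= dist x y.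
  move: inL srt; case: (L) => //= h t; rewrite in_cons => /orP[/eqP -> //|ht] srt.
  have := order_path_min le_trans srt => /allP; apply => //.
move: hL; rewrite mem_filter /pred0 => /andP[/andP[h0 h1] _].
by split => //; apply: le_trans hmin yr0.
Qed.

Lemma cover_iter lam : doubling_ok dist lam -> forall k p (r : R), 0 < r ->
  exists Q : {set P}, (#|Q| <= lam ^ k)%N /\
    ball dist setT p r \subset \bigcup_(q in Q) ball dist setT q (r / 2 ^+ k).
Proof.
move=> Hd; elim => [|k IH] p r r0.
  exists [set p]; rewrite cards1 expn0; split => //.
  apply/subsetP => x xb; apply/bigcupP; exists p; first by rewrite in_set1.
  by rewrite expr0 divr1.
have [Q [QC Qsub]] := IH p r r0.
have rk0 : 0 < r / 2 ^+ k by rewrite divr_gt0 // exprn_gt0.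
pose ok q (Q' : {set P}) := (#|Q'| <= lam)%N &&
   (ball dist setT q (r / 2 ^+ k) \subset \bigcup_(q' in Q') ball dist setT q' (r / 2 ^+ k / 2)).
pose f q := odflt set0 [pick Q' | ok q Q'].
have fok q : ok q (f q).
  rewrite /f; case: pickP => [Q' //|H].
  have [Q' [h1 h2]] := Hd q _ rk0.
  by move: (H Q'); rewrite /ok h1 h2.
exists (\bigcup_(q in Q) f q); split.
  apply: leq_trans (card_bigcup_le _ _) _.
  apply: (@leq_trans (\sum_(i in Q) lam)%N); first by apply: leq_sum => q _; case/andP: (fok q).
  rewrite sum_nat_const expnS mulnC; exact: leq_mul.
apply/subsetP => x xb.
have /bigcupP [q qQ xq] := subsetP Qsub x xb.
have /bigcupP [q' q'f xq'] := subsetP (proj2 (andP (fok q))) x xq.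
apply/bigcupP; exists q'; first by apply/bigcupP; exists q.
by move: xq'; rewrite exprS [2 * _]mulrC invfM mulrA.
Qed.

Lemma bad_many lam p (mu : R) : doubling_ok dist lam -> p \in S -> 0 < sr p ->
  0 < mu < 4 ->
  #|ball dist S p (mu * sr p)|%:R - (lam ^ 3)%:R * (#|S|%:R / c)
    <= #|[set x in S | sr x < sr p]|%:R.
Proof.
move=> Hd pS rp0 /andP[mu0 mu4].
set rp := sr p.
have r0 : 0 < mu * rp by rewrite mulr_gt0.
have [Q [QC Qsub]] := cover_iter Hd 3 p r0.
set rho := mu * rp / 2 ^+ 3.
pose heavy q := #|S|%:R / c <= #|ball dist S q rho|%:R.
set U := [set x in S | sr x < rp].
set V := \bigcup_(q in Q | ~~ heavy q) ball dist S q rho.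
have BUV : ball dist S p (mu * rp) \subset U :|: V.
  apply/subsetP => x; rewrite /ball in_set => /andP[xS xp].
  have xb : x \in ball dist setT p (mu * rp) by rewrite /ball in_set in_setT.
  have /bigcupP [q qQ] := subsetP Qsub x xb.
  rewrite /ball in_set => /andP[_ xq]; rewrite -/rho in xq.
  rewrite in_setU; case hq: (heavy q).
    apply/orP; left; rewrite /U in_set xS /=.
    have sub : ball dist S q rho \subset ball dist S x (2 * rho).
      apply/subsetP => z; rewrite /ball !in_set => /andP[zS zq]; rewrite zS /=.
      apply: le_trans (dist_tri x q z) _; rewrite dist_sym.
lra.
    have Hh : #|S|%:R / c <= #|ball dist S x (2 * rho)|%:R.
      apply: le_trans hq _; rewrite ler_nat; exact: subset_leq_card.
    have rho0 : 0 <= 2 * rho by rewrite /rho; apply: mulr_ge0 => //; apply: divr_ge0; [apply: ltW|apply: exprn_ge0].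
    have [_ _ h] := sr_spec xS rho0 Hh.
    apply: le_lt_trans h _; rewrite /rho; rewrite -/rp.
    have -> : (2:R) ^+ 3 = 8 by rewrite !exprS expr0; lra.
    nra.
  apply/orP; right; apply/bigcupP; exists q; first by rewrite qQ hq.
  by rewrite /ball in_set xS.
have h1 : (#|ball dist S p (mu * rp)| <= #|U| + #|V|)%N.
  apply: leq_trans (subset_leq_card BUV) _; exact: leq_card_setU.
have h2 : #|V|%:R <= (lam ^ 3)%:R * (#|S|%:R / c) :> R.
  apply: (@le_trans _ _ (\sum_(q in Q | ~~ heavy q) #|ball dist S q rho|)%N%:R).
    rewrite ler_nat; exact: card_bigcup_le.
  rewrite natr_sum.
  apply: (@le_trans _ _ (\sum_(q in Q | ~~ heavy q) (#|S|%:R / c))).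
    by apply: ler_sum => q /andP[_ /negP hq]; rewrite /heavy in hq; apply: ltW; rewrite ltNge; apply/negP.
  have hc : 0 <= #|S|%:R / c by apply: le_trans (ltW Hnc); exact: ler01.
  apply: (@le_trans _ _ (\sum_(q in Q) (#|S|%:R / c))).
    rewrite [X in _ <= X](bigID heavy) /= lerDr; exact: sumr_ge0.
  rewrite sumr_const -(mulr_natl (#|S|%:R / c)); apply: (ler_wpM2r hc); rewrite ler_nat; exact: QC.
have h1' : #|ball dist S p (mu * rp)|%:R <= #|U|%:R + #|V|%:R :> R by rewrite -natrD ler_nat.
lra.
Qed.

End Geo.

Lemma many_small (R : realType) (T : finType) (S : {set T}) (f : T -> R) (m : nat) :
  (minn m #|S| <= #|[set p in S | (#|[set x in S | (f x < f p)%R]| < m)%N]|)%N.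
Proof.
set A := [set p in S | _].
rewrite leqNgt; apply/negP => hA.
have AS : A \subset S by apply/subsetP => x; rewrite in_set => /andP[].
have hAS : (#|A| < #|S|)%N by apply: leq_trans hA (geq_minr _ _).
have hAm : (#|A| < m)%N by apply: leq_trans hA (geq_minl _ _).
have [p0 p0D] : exists p0, p0 \in S :\: A.
  apply/set0Pn; rewrite -card_gt0 cardsDS //; lia.
case: (arg_minP f p0D) => p pD0 pmin0.
have pD : p \in S :\: A by exact: pD0.
have pmin : forall j, j \in S :\: A -> f p <= f j by move=> j jD; exact: pmin0 j jD.
move: pD; rewrite in_setD => /andP[pA pS].
have sub : [set x in S | f x < f p] \subset A.
  apply/subsetP => x; rewrite in_set => /andP[xS xp].
  apply/negPn/negP => xA.
  have := pmin x; rewrite in_setD xA xS => /(_ isT); rewrite leNgt xp.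
  by [].
move/negP: pA; apply; rewrite in_set pS /=.
apply: leq_ltn_trans (subset_leq_card sub) hAm.
Qed.

Lemma lam_ge2 (R : realType) (P : finType) (dist : P -> P -> R) lam (x y : P) :
  is_metric dist -> doubling_ok dist lam -> x != y -> (2 <= lam)%N.
Proof.
move=> Hm Hd xy.
have r0 := dist_gt0 Hm xy.
have [Q [QC Qsub]] := cover_iter Hd 2 x r0.
have xb : x \in ball dist setT x (dist x y) by rewrite /ball in_set in_setT (dist_xx Hm) ltW.
have yb : y \in ball dist setT x (dist x y) by rewrite /ball in_set in_setT lexx.
have /bigcupP [q1 q1Q] := subsetP Qsub x xb.
rewrite /ball in_set => /andP[_ h1].
have /bigcupP [q2 q2Q] := subsetP Qsub y yb.
rewrite /ball in_set => /andP[_ h2].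
rewrite leqNgt; apply/negP => hl.
have Q1 : (#|Q| <= 1)%N by apply: leq_trans QC _; move: hl; case: (lam) => [|[|]].
have e12 : q1 = q2.
  by move/card_le1P: Q1 => /(_ q1 q1Q q2); rewrite q2Q => /esym/eqP.
subst q2.
have := dist_tri Hm x q1 y; rewrite (dist_sym Hm x q1).
rewrite (_ : (2:R) ^+ 2 = 4) in h1 h2; last by rewrite !exprS expr0; lra.
lra.
Qed.

Lemma good_count (R : realType) (P : finType) (dist : P -> P -> R) (S : {set P}) (c : R) lam :
  is_metric dist -> 1 < #|S|%:R / c -> doubling_ok dist lam ->
  (lam ^ 3)%:R * (#|S|%:R / c) <= 4 / 9 * #|S|%:R ->
  (forall p, p \in S -> 0 < sep_radius dist S #|S| c p) ->
  (#|S| <= 18 * #|[set p in S | (#|ball dist S p (expR 1 * sep_radius dist S #|S| c p)|%:R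
                                 <= #|S|%:R / 2 :> R)%R]|)%N.
Proof.
move=> Hm Hnc Hd Hl Hsr.
set sr := sep_radius dist S #|S| c.
set n := #|S|.
have [e1 e2] := e_bounds R.
have hA := many_small S sr (n %/ 18 + 1).
set A := [set p in S | _] in hA.
set G := [set p in S | _].
have AG : A \subset G.
  apply/subsetP => p; rewrite in_set => /andP[pS hp].
  rewrite in_set pS /=; rewrite leNgt; apply/negP => hb.
  have hbm := bad_many Hm Hnc Hd pS (Hsr p pS) (mu := expR 1) (ltac:(apply/andP; split; [exact: expR_gt0|lra])).
  set k := #|[set x in S | sr x < sr p]| in hp hbm.
  have hk : (k * 18 <= n)%N.
    have : (k <= n %/ 18)%N by rewrite addn1 ltnS in hp.
    by rewrite -leq_divRL.
  have hk' : (k%:R * 18 <= n%:R :> R).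
    by have := hk; rewrite -(ler_nat R) natrM.
  lra.
have := subset_leq_card AG.
move: hA; rewrite /minn; case: ltnP => h1 h2 h3.
- have : (n < 18 * (n %/ 18 + 1))%N.
    lia.
  lia.
- lia.
Qed.

Lemma unif_enum_pr (R : realType) (T : finType) (S : {set T}) A (f : T -> prog A) E :
  S != set0 -> pr (unif_seq (enum S) f) E = #|S|%:R^-1 * \sum_(x in S) pr (f x) E :> R.
Proof.
move=> S0; rewrite -big_enum cardE.
have : enum S != [::] by move: S0; apply: contraNneq => h; apply/eqP/setP => x; rewrite -mem_enum h in_set0.
case: (enum S) => [//|x0 s] _ /=.
congr (_ * _); rewrite (big_nth x0) big_mkord; apply: eq_bigr => i _ //.
Qed.

Lemma unif_enum_ecost (R : realType) (T : finType) (S : {set T}) A (f : T -> prog A) :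
  S != set0 -> ecost (unif_seq (enum S) f) = #|S|%:R^-1 * \sum_(x in S) ecost (f x) :> R.
Proof.
move=> S0; rewrite -big_enum cardE.
have : enum S != [::] by move: S0; apply: contraNneq => h; apply/eqP/setP => x; rewrite -mem_enum h in_set0.
case: (enum S) => [//|x0 s] _ /=.
congr (_ * _); rewrite (big_nth x0) big_mkord; apply: eq_bigr => i _ //.
Qed.

Section Sparse.
Variable R : realType.

Lemma Rseq_mono t (R' : R) : 0 <= R' -> {homo Rseq t R' : i j / (i <= j)%N >-> i <= j}.
Proof.
move=> R0 i j ij; rewrite /Rseq; apply: ler_wpM2r => //; apply: ler_weXn2l => //.
by rewrite lerDl invr_ge0.
Qed.

Lemma Rseq_ge t (R' : R) i : 0 <= R' -> R' <= Rseq t R' i.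
Proof. by move=> R0; have := Rseq_mono t R0 (leq0n i); rewrite /Rseq expr0 mul1r. Qed.

Lemma Rseq_le_e t (R' : R) i : (1 <= t)%N -> 0 <= R' -> (i <= t)%N -> Rseq t R' i <= expR 1 * R'.
Proof.
move=> t1 R0 it; apply: le_trans (Rseq_mono t R0 it) _.
rewrite /Rseq; apply: ler_wpM2r => //.
have t0 : 0 < t%:R :> R by rewrite ltr0n.
apply: (@le_trans _ _ (expR (t%:R^-1) ^+ t)).
  apply: lerXn2r; rewrite ?nnegrE ?expR_ge0 ?addr_ge0 ?invr_ge0 ?ler0n //.
  exact: expR_ge1Dx.
by rewrite -expRM_natl mulfV // gt_eqF.
Qed.

Lemma Rseq_S t (R' : R) j : Rseq t R' j.+1 = (1 + t%:R^-1) * Rseq t R' j.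
Proof. by rewrite /Rseq exprS mulrA. Qed.

Lemma Rseq_gt0 t (R' : R) j : 0 < R' -> 0 < Rseq t R' j.
Proof. move=> R0; rewrite /Rseq mulr_gt0 // exprn_gt0 //; apply: (@lt_le_trans _ _ 1) => //; rewrite lerDl invr_ge0 //. Qed.

Lemma ball_mono (P : finType) (dist : P -> P -> R) S p (r r' : R) : r <= r' ->
  ball dist S p r \subset ball dist S p r'.
Proof.
move=> rr; apply/subsetP => z; rewrite /ball !in_set => /andP[-> h] /=; exact: le_trans h rr.
Qed.

Lemma annulus_card (P : finType) (dist : P -> P -> R) S p (r r' : R) : r <= r' ->
  #|annulus dist S p r r'| = (#|ball dist S p r'| - #|ball dist S p r|)%N.
Proof.
move=> rr; rewrite -cardsDS ?ball_mono //; apply: eq_card => z.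
rewrite /annulus /ball in_setD !in_set; case: (z \in S) => //=.
by rewrite -ltNge andbC.
Qed.

End Sparse.

Lemma sparse_pr (R : realType) (P : finType) (dist : P -> P -> R) (S : {set P}) (p : P) (R' : R) (t : nat) :
  (1 <= t)%N -> 0 < R' -> (0 < #|S|)%N ->
  #|ball dist S p (expR 1 * R')|%:R <= #|S|%:R / 2 :> R ->
  pr (SparseSepAnn_body dist S #|S| t p R') (fun o => if o is None then true else false) <= 1 - 2^-1 :> R.
Proof.
move=> t1 R0 n0 hb.
rewrite /SparseSepAnn_body /=.
set a := fun j : nat => #|annulus dist S p (Rseq t R' j) (Rseq t R' j.+1)|%:R : R.
set nt := #|S|%:R / t%:R : R.
rewrite (eq_bigr (fun i : 'I_t.-1.+1 => ((nt < a i)%R%:R : R))); last first.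
  by move=> i _; rewrite ltNge /a; case: ifP.
rewrite -(big_mkord xpredT (fun i => ((nt < a i)%R%:R : R))) prednK //.
set b := fun i => #|ball dist S p (Rseq t R' i)|.
have bmono : {homo b : i j / (i <= j)%N}.
  move=> i j ij; apply: subset_leq_card; apply: ball_mono; apply: Rseq_mono => //; exact: ltW.
have ha : forall i, a i = (b i.+1 - b i)%N%:R.
  by move=> i; rewrite /a annulus_card // Rseq_S ler_peMl ?(ltW (Rseq_gt0 _ _ _)) // lerDl invr_ge0.
have hsum : \sum_(0 <= i < t) a i <= #|S|%:R / 2.
  under eq_bigr => i _ do rewrite ha.
  rewrite -natr_sum telescope_sumn //.
  apply: le_trans hb; rewrite ler_nat; apply: leq_trans (leq_subr _ _) _.
  apply: subset_leq_card; apply: ball_mono; apply: Rseq_le_e => //; exact: ltW.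
have hbad : nt * \sum_(0 <= i < t) ((nt < a i)%R%:R : R) <= \sum_(0 <= i < t) a i.
  rewrite mulr_sumr; apply: ler_sum => i _; case: ltP => h; rewrite ?mulr1 ?mulr0 //; first exact: ltW.
set X := \sum_(0 <= i < t) _ in hbad *.
have n0R : 0 < #|S|%:R :> R by rewrite ltr0n.
have h : nt * X <= #|S|%:R / 2 by apply: le_trans hbad hsum.
rewrite /nt in h; rewrite -(ler_pM2l n0R) mulrA; lra.
Qed.

Lemma sparse_ecost (R : realType) (P : finType) (dist : P -> P -> R) (S : {set P}) (p : P) (R' : R) (t : nat) :
  ecost (SparseSepAnn_body dist S #|S| t p R') = (#|S|.+1)%:R :> R.
Proof.
rewrite /SparseSepAnn_body /=.
under eq_bigr => i _ do rewrite addr0.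
rewrite sumr_const card_ord -(mulr_natr (#|S|.+1%:R)) mulrCA mulVf ?mulr1 //.
by rewrite pnatr_eq0.
Qed.

Lemma sep_ecost (R : realType) (P : finType) (dist : P -> P -> R) (S : {set P}) (mu c : R) :
  S != set0 -> ecost (SepAnn_body dist S #|S| mu c) = ((3 * #|S|).+1)%:R :> R.
Proof.
move=> S0; rewrite /SepAnn_body unif_enum_ecost //=.
under eq_bigr => x _ do rewrite addr0.
rewrite sumr_const -(mulr_natr ((3 * #|S|).+1%:R)) mulrCA mulVf ?mulr1 //.
by rewrite pnatr_eq0 -lt0n card_gt0.
Qed.

Lemma sep_pr (R : realType) (P : finType) (dist : P -> P -> R) (S : {set P}) (mu c : R) :
  S != set0 ->
  pr (SepAnn_body dist S #|S| mu c) (fun o => if o is None then true else false) =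
  #|S|%:R^-1 * (#|S| - #|[set p in S | (#|ball dist S p (mu * sep_radius dist S #|S| c p)|%:R
                                 <= #|S|%:R / 2 :> R)%R]|)%N%:R :> R.
Proof.
move=> S0; rewrite /SepAnn_body unif_enum_pr //=; congr (_ * _).
set G := [set p in S | _].
have GS : G \subset S by apply/subsetP => x; rewrite in_set => /andP[].
have hc : (\sum_(x in S) ((x \notin G) : nat) = #|S :\: G|)%N.
  rewrite (eq_bigr (fun x => if x \notin G then 1 else 0)%N); last by move=> x _; case: (x \notin G).
  rewrite -big_mkcondr /= sum1_card; apply: eq_card => x; rewrite in_setD andbC //.
rewrite -cardsDS // -hc natr_sum; apply: eq_bigr => x xS.
rewrite /G in_set xS /=; case: ifP => //.
Qed.


Lemma allret_T (A : Type) (m : prog A) : allret (fun _ => True) m.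
Proof. by elim: m => //=. Qed.

Theorem lemma4 (R : realType) :
  exists C : R, 0 < C /\
  forall (P : finType) (dist : P -> P -> R) (lam : nat) (d : R)
         (S : {set P}) (n t : nat),
    is_metric dist ->
    doubling_constant dist lam ->
    d = doubling_dim R lam ->
    S != set0 ->
    n = #|S| ->
    (1 <= t)%N ->
    let c := 2 * (4 * expR 1) `^ d in
    c + 1 <= n%:R ->
    (* expected running time O(c n), uniformly in the fuel *)
    (forall fuel, ecost (SparseSepAnn dist fuel S n d t) <= C * c * n%:R) /\
    (* every possible output (p, R) satisfies p in S, R > 0 and (1)-(3) *)
    (forall fuel,
       pr (SparseSepAnn dist fuel S n d t)
          (fun pR => ~~ [&& pR.1 \in S, 0 < pR.2,
               n%:R / c <= #|ball dist S pR.1 pR.2|%:R :> R,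
               #|annulus dist S pR.1 pR.2 ((1 + t%:R^-1) * pR.2)|%:R
                 <= n%:R / t%:R :> R &
               n%:R / 2 <= #|S :\: ball dist S pR.1 ((1 + t%:R^-1) * pR.2)|%:R :> R])
       = 0 :> R).
Proof.
exists 100; split; first lra.
move=> P dist lam d S n t Hm [Hdok _] Hd S0 Hn t1 c Hcn.
subst n.
have [e1 e2] := e_bounds R.
have c0 : 0 < c by rewrite /c mulr_gt0 // powR_gt0 // mulr_gt0 // expR_gt0.
have n2 : (1 < #|S|)%N by rewrite -(ltr_nat R); lra.
have [x [y [xS yS xy]]] := card_gt1P n2.
have l2 := lam_ge2 Hm Hdok xy.
have cb : (lam ^ 3)%:R * 9 / 8 <= (4 * expR 1) `^ d by rewrite Hd; exact: c_bound.
have l3 : 8 <= (lam ^ 3)%:R :> R.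
  have : (2 ^ 3 <= lam ^ 3)%N by rewrite leq_exp2r.
  by rewrite -(ler_nat R) => h; apply: le_trans h; rewrite natrX; lra.
have c18 : 18 <= c by rewrite /c; lra.
have n0 : 0 < #|S|%:R :> R by lra.
have Hnc : 1 < #|S|%:R / c by rewrite ltr_pdivlMr // mul1r; lra.
have Hl : (lam ^ 3)%:R * (#|S|%:R / c) <= 4 / 9 * #|S|%:R.
  have h : (lam ^ 3)%:R / c <= 4 / 9 by rewrite ler_pdivrMr //; rewrite /c in cb *; lra.
  by rewrite mulrCA mulrC ler_pM2r.
set sr := sep_radius dist S #|S| c.
have Hsr : forall p, p \in S -> 0 < sr p /\ #|S|%:R / c <= #|ball dist S p (sr p)|%:R.
  move=> p pS.
  set r0 := \sum_(z in S) dist p z.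
  have r00 : 0 <= r0 by apply: sumr_ge0 => z _; exact: dist_ge0.
  have hb : ball dist S p r0 = S.
    apply/setP => z; rewrite /ball in_set; case zS: (z \in S) => //=.
    rewrite /r0 (bigD1 z) //= lerDl; apply: sumr_ge0 => w _; exact: dist_ge0.
  have hnc : #|S|%:R / c <= #|ball dist S p r0|%:R.
    by rewrite hb ler_pdivrMr //; nra.
  by have [h1 h2 _] := sr_spec Hm Hnc pS r00 hnc; split.
have Hg := good_count Hm Hnc Hdok Hl (fun p pS => (Hsr p pS).1).
pose Q1 (a : P * R) := [/\ a.1 \in S, a.2 = sr a.1 &
   #|ball dist S a.1 (expR 1 * a.2)|%:R <= #|S|%:R / 2 :> R].
have hQ1 : allret (fun o => if o is Some a then Q1 a else True) (SepAnn_body dist S #|S| (expR 1) c).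
  rewrite /SepAnn_body; apply: (@allret_unif_seq _ _ _ _ _ (fun x => x \in S)).
  - by move=> p pS /=; case: ifP => // h; split.
  - by move=> i x0 hi; have := mem_nth x0 hi; rewrite mem_enum.
pose GoodB (pR : P * R) := [&& pR.1 \in S, 0 < pR.2,
               #|S|%:R / c <= #|ball dist S pR.1 pR.2|%:R :> R,
               #|annulus dist S pR.1 pR.2 ((1 + t%:R^-1) * pR.2)|%:R
                 <= #|S|%:R / t%:R :> R &
               #|S|%:R / 2 <= #|S :\: ball dist S pR.1 ((1 + t%:R^-1) * pR.2)|%:R :> R].
have hbody : forall a, Q1 a ->
    allret (fun o => if o is Some b then GoodB b else True) (SparseSepAnn_body dist S #|S| t a.1 a.2).
  move=> [p R'] [/= pS eR hball]; subst R'.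
  have [h0 hb0] := Hsr p pS.
  rewrite /SparseSepAnn_body /= => j; case: ifP => // hA.
  rewrite /GoodB /= pS /=; apply/and4P; split.
  - exact: Rseq_gt0.
  - apply: le_trans hb0 _; rewrite ler_nat; apply: subset_leq_card; apply: ball_mono.
    exact: Rseq_ge (ltW h0).
  - by rewrite -Rseq_S.
  - rewrite -Rseq_S.
    have bS : ball dist S p (Rseq t (sr p) j.+1) \subset S.
      by apply/subsetP => z; rewrite /ball in_set => /andP[].
    have hj : (j.+1 <= t)%N by have h := ltn_ord j; rewrite -[X in (_ <= X)%N](prednK t1).
    have hle : #|ball dist S p (Rseq t (sr p) j.+1)|%:R <= #|S|%:R / 2 :> R.
      apply: le_trans hball; rewrite ler_nat; apply: subset_leq_card; apply: ball_mono.
      exact: Rseq_le_e (ltW h0) hj.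
    rewrite cardsDS // natrB; last exact: subset_leq_card.
    lra.
split => fuel.
  have L1 : ecost (SepAnn dist fuel S #|S| (expR 1) c) <= ((3 * #|S|).+1)%:R / 18^-1 :> R.
    apply: (@ecost_loop R _ _ (fun _ => True)).
    - by rewrite invr_gt0; lra.
    - exact: allret_T.
    - by rewrite sep_ecost.
    - rewrite sep_pr //.
      set G := [set p in S | _].
      have Hg' : (#|S| <= 18 * #|G|)%N := Hg.
      have GS : (#|G| <= #|S|)%N by apply: subset_leq_card; apply/subsetP => z; rewrite in_set => /andP[].
      rewrite natrB // mulrBr mulVf ?gt_eqF //.
      have : #|S|%:R <= 18 * #|G|%:R :> R by rewrite -(ler_nat R) natrM in Hg'.
      move=> h; rewrite lerD2l lerN2 ler_pdivlMl //; lra.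
  have L2 : forall a, Q1 a ->
      ecost (loop fuel (SparseSepAnn_body dist S #|S| t a.1 a.2)) <= (#|S|.+1)%:R / 2^-1 * (true)%:R :> R.
    move=> [p R'] [/= pS eR hball]; subst R'.
    have [h0 _] := Hsr p pS.
    rewrite mulr1; apply: (@ecost_loop R _ _ (fun _ => True)).
    - by rewrite invr_gt0; lra.
    - exact: allret_T.
    - by rewrite sparse_ecost.
    - by apply: sparse_pr => //; rewrite -(ltr_nat R); lra.
  have b0 : 0 <= (#|S|.+1)%:R / 2^-1 :> R by rewrite divr_ge0 // invr_ge0; lra.
  rewrite /SparseSepAnn /=.
  have hb := @ecost_bind R _ _ Q1 _ _ (fun _ => true) _ b0 (allret_loop fuel hQ1) L2.
  have hp := @pr_le1 R _ (SepAnn dist fuel S #|S| (expR 1) c) (fun _ => true).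
  have e3 : ((3 * #|S|).+1)%:R = 3 * #|S|%:R + 1 :> R by rewrite -natr1 natrM.
  have e4 : (#|S|.+1)%:R = #|S|%:R + 1 :> R by rewrite -natr1.
  rewrite e3 in L1; rewrite e4 in hb b0.
  have cn : 18 * #|S|%:R <= c * #|S|%:R by apply: ler_wpM2r => //; lra.
  rewrite invrK in L1 hb b0.
  have hb2 : (#|S|%:R + 1) * 2 * pr (R:=R) (SepAnn dist fuel S #|S| (expR 1) c) (fun _ => true) <= (#|S|%:R + 1) * 2.
    by apply: ler_piMr => //; lra.
  nra.
apply: (@allret_pr0 R _ (fun a => GoodB a)); last by move=> a Ga; apply/negbTE; rewrite negbK; exact: Ga.
rewrite /SparseSepAnn /=.
apply: (allret_bind (Q := Q1)); first by apply: allret_loop; exact: hQ1.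
by move=> a Qa; apply: allret_loop; exact: hbody.
Qed.
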